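(* Let $m,b\ge 1$ and $r\ge 0$ be integers, let $f\colon[0,1]\to\mathbb R$ be $(r+1)$-times differentiable with $|f^{(r+1)}(x)|\le M$ for all $x\in[0,1]$, and let $B=(B_1,\dots,B_b)\in\mathrm{PTE}(m,b,r)$. Setting $$c_j=\sum_{i\in B_j}\int_{(i-1)/m}^{i/m} f(x)\,dx,\qquad j=1,\dots,b,$$ we have, for all $i,j\in\{1,\dots,b\}$, $$|c_i-c_j|\le \frac{M}{2^{r}\,b\,(r+1)!}.$$
   Context: $[m]=\{1,\dots,m\}$. A partition of $[m]$ into $b$ blocks is an ordered list $(B_1,\dots,B_b)$ of pairwise disjoint (possibly empty) subsets with union $[m]$. It is $r$-regular if $\sum_{x\in B_1}x^k=\dots=\sum_{x\in B_b}x^k$ for all $k=0,1,\dots,r$. $\mathrm{PTE}(m,b,r)$ denotes the set of $r$-regular partitions of $[m]$ into $b$ blocks. *)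

(* Defs.v *)
From Stdlib Require Import Reals Lra Lia List ClassicalEpsilon.
Open Scope R_scope.

(* Derivative of g at x relative to the closed interval [0,1]
   (one-sided at the endpoints): the difference quotient tends to l
   as h -> 0 with h <> 0 and x + h in [0,1]. *)
Definition deriv01 (g : R -> R) (x l : R) : Prop :=
  forall eps : R, 0 < eps -> exists delta : R, 0 < delta /\
    forall h : R, h <> 0 -> Rabs h < delta -> 0 <= x + h <= 1 ->
      Rabs ((g (x + h) - g x) / h - l) < eps.

(* Total Riemann integral: the value of the Riemann integral of g over
   [a,b] when g is Riemann integrable there (unspecified otherwise). *)
Definition Rint (g : R -> R) (a b : R) : R :=
  epsilon (inhabits 0)
    (fun v => exists pr : Riemann_integrable g a b, RiemannInt pr = v).

(* Sum of w over the elements x of [m] = {1..m} lying in block j of the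
   partition encoded by B : nat -> nat (B x = index of the block containing x,
   blocks indexed 0..b-1). *)
Definition block_sum (m : nat) (B : nat -> nat) (j : nat) (w : nat -> R) : R :=
  fold_right Rplus 0 (map w (filter (fun x => Nat.eqb (B x) j) (seq 1 m))).

(* B encodes an ordered partition (B_0,...,B_{b-1}) of [m] into b (possibly
   empty) blocks: B_j = {x in [m] | B x = j}. *)
Definition is_partition (m b : nat) (B : nat -> nat) : Prop :=
  forall x : nat, (1 <= x <= m)%nat -> (B x < b)%nat.

Definition PTE (m b r : nat) (B : nat -> nat) : Prop :=
  is_partition m b B /\
  forall k j1 j2 : nat, (k <= r)%nat -> (j1 < b)%nat -> (j2 < b)%nat ->
    block_sum m B j1 (fun x => INR x ^ k) = block_sum m B j2 (fun x => INR x ^ k).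

(* Main.v *)
Require Import Defs.
From Stdlib Require Import Reals List Arith Factorial Lra Lia ClassicalEpsilon.
From Coquelicot Require Import Coquelicot.
Open Scope R_scope.

Definition clamp (y : R) : R := Rmax 0 (Rmin 1 y).

Lemma clamp_in y : 0 <= clamp y <= 1.
Proof. unfold clamp, Rmax, Rmin; repeat destruct Rle_dec; lra. Qed.

Lemma clamp_id y : 0 <= y <= 1 -> clamp y = y.
Proof. intros. unfold clamp, Rmax, Rmin; repeat destruct Rle_dec; lra. Qed.

Lemma clamp_lip y z : Rabs (clamp y - clamp z) <= Rabs (y - z).
Proof.
  unfold clamp, Rmax, Rmin; repeat destruct Rle_dec;
  unfold Rabs; repeat destruct Rcase_abs; lra.
Qed.

Lemma d01_cont g x l : 0 <= x <= 1 -> deriv01 g x l ->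
  forall eps, 0 < eps -> exists d, 0 < d /\ forall y, 0 <= y <= 1 -> Rabs (y - x) < d ->
    Rabs (g y - g x) < eps.
Proof.
  intros Hx Hd eps He.
  destruct (Hd 1 Rlt_0_1) as [d1 [Hd1 H1]].
  assert (Hl : 0 < Rabs l + 1) by (generalize (Rabs_pos l); lra).
  exists (Rmin d1 (eps / (Rabs l + 1))). split.
  { apply Rmin_pos; auto. apply Rdiv_lt_0_compat; lra. }
  intros y Hy Hyx.
  destruct (Req_dec y x) as [->|Hne].
  { replace (g x - g x) with 0 by ring. rewrite Rabs_R0; lra. }
  assert (Hh : y - x <> 0) by lra.
  assert (Hm1 := Rmin_l d1 (eps / (Rabs l + 1))).
  assert (Hm2 := Rmin_r d1 (eps / (Rabs l + 1))).
  specialize (H1 (y - x) Hh ltac:(lra) ltac:(replace (x + (y - x)) with y by ring; lra)).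
  replace (x + (y - x)) with y in H1 by ring.
  set (q := (g y - g x) / (y - x)) in *.
  assert (Eq : g y - g x = q * (y - x)) by (unfold q; field; auto).
  rewrite Eq, Rabs_mult.
  assert (Hq : Rabs q < Rabs l + 1).
  { replace q with ((q - l) + l) by ring.
    generalize (Rabs_triang (q - l) l); lra. }
  assert (Hyx2 : Rabs (y - x) < eps / (Rabs l + 1)) by lra.
  assert (Hp : Rabs (y - x) * (Rabs l + 1) < eps).
  { apply (Rmult_lt_compat_r (Rabs l + 1)) in Hyx2; auto.
    unfold Rdiv in Hyx2. rewrite Rmult_assoc, Rinv_l in Hyx2; lra. }
  generalize (Rabs_pos q) (Rabs_pos (y - x)). nra.
Qed.

Lemma clamp_cont g : (forall x, 0 <= x <= 1 -> exists l, deriv01 g x l) ->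
  forall y, continuity_pt (fun t => g (clamp t)) y.
Proof.
  intros Hg y. unfold continuity_pt, continue_in, limit1_in, limit_in. simpl.
  unfold R_dist. intros eps He.
  destruct (Hg (clamp y) (clamp_in y)) as [l Hl].
  destruct (d01_cont g (clamp y) l (clamp_in y) Hl eps He) as [d [Hd H]].
  exists d. split; auto. intros z [_ Hz].
  apply H. apply clamp_in. generalize (clamp_lip z y). lra.
Qed.

Lemma clamp_derive g g' c : 0 < c < 1 -> deriv01 g c (g' c) ->
  is_derive (fun t => g (clamp t)) c (g' c).
Proof.
  intros Hc Hd. apply is_derive_Reals. intros eps He.
  destruct (Hd eps He) as [d [Hd0 H]].
  assert (Hp : 0 < Rmin d (Rmin c (1 - c))) by (repeat apply Rmin_pos; lra).
  exists (mkposreal _ Hp). simpl. intros h Hh Hab.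
  assert (Hm1 := Rmin_l d (Rmin c (1 - c))).
  assert (Hm2 := Rmin_r d (Rmin c (1 - c))).
  assert (Hm3 := Rmin_l c (1 - c)).
  assert (Hm4 := Rmin_r c (1 - c)).
  assert (Hb : - Rabs h <= h <= Rabs h) by (unfold Rabs; destruct Rcase_abs; lra).
  rewrite (clamp_id (c + h)) by lra. rewrite (clamp_id c) by lra.
  apply H; auto; lra.
Qed.

Lemma mvt_comb G G' Q Q' a b :
  (forall x, 0 <= x <= 1 -> deriv01 G x (G' x)) ->
  (forall x, is_derive Q x (Q' x)) ->
  0 <= a -> a <= b -> b <= 1 ->
  exists c, a <= c <= b /\ (G b - Q b) - (G a - Q a) = (G' c - Q' c) * (b - a).
Proof.
  intros HG HQ Ha Hab Hb.
  destruct (MVT_gen (fun t => G (clamp t) - Q t) a b (fun t => G' t - Q' t)) as [c [Hc E]].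
  - intros x Hx. rewrite Rmin_left in Hx by lra. rewrite Rmax_right in Hx by lra.
    apply (is_derive_minus (fun t => G (clamp t)) Q).
    + apply clamp_derive. lra. apply HG; lra.
    + apply HQ.
  - intros x _. apply continuity_pt_minus.
    + apply clamp_cont. intros z Hz. exists (G' z). auto.
    + apply continuity_pt_filterlim. apply (ex_derive_continuous Q). eexists; apply HQ.
  - rewrite Rmin_left in Hc by lra. rewrite Rmax_right in Hc by lra.
    exists c. split; auto. rewrite !clamp_id in E by lra. exact E.
Qed.


Lemma fact_S_R n : INR (fact (S n)) = INR (S n) * INR (fact n).
Proof. rewrite fact_simpl, mult_INR. reflexivity. Qed.

Lemma pterm_derive k al be n y :
  is_derive (fun y => k * (al * y + be) ^ (S n) / INR (fact (S n))) y
    (k * al * (al * y + be) ^ n / INR (fact n)).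
Proof.
  auto_derive; auto.
  change (match n with 0%nat => 1 | S _ => INR n + 1 end) with (INR (S n)).
  replace (INR (fact n + n * fact n)) with (INR (S n) * INR (fact n))
    by (rewrite <- mult_INR; reflexivity).
  assert (H1 := INR_fact_neq_0 n). assert (H2 : INR (S n) <> 0) by (apply not_0_INR; lia).
  field. split; auto.
Qed.

Lemma one_side_le G G' Q Q' k al be n a b :
  (forall x, 0 <= x <= 1 -> deriv01 G x (G' x)) ->
  (forall x, is_derive Q x (Q' x)) ->
  0 <= a -> a <= b -> b <= 1 ->
  (forall c, a <= c <= b -> G' c - Q' c - k * al * (al * c + be) ^ n / INR (fact n) <= 0) ->
  (G b - Q b) - (G a - Q a) <=
    k * (al * b + be) ^ (S n) / INR (fact (S n)) - k * (al * a + be) ^ (S n) / INR (fact (S n)).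
Proof.
  intros HG HQ Ha Hab Hb Hc.
  destruct (mvt_comb G G' (fun y => Q y + k * (al * y + be) ^ (S n) / INR (fact (S n)))
     (fun y => Q' y + k * al * (al * y + be) ^ n / INR (fact n)) a b HG) as [c [Hc1 E]]; auto.
  { intros x. apply (is_derive_plus Q). apply HQ. apply pterm_derive. }
  specialize (Hc c Hc1).
  assert (X : (G' c - (Q' c + k * al * (al * c + be) ^ n / INR (fact n))) * (b - a) <= 0).
  { apply Rmult_le_0_r; lra. }
  lra.
Qed.

Lemma one_side_ge G G' Q Q' k al be n a b :
  (forall x, 0 <= x <= 1 -> deriv01 G x (G' x)) ->
  (forall x, is_derive Q x (Q' x)) ->
  0 <= a -> a <= b -> b <= 1 ->
  (forall c, a <= c <= b -> 0 <= G' c - Q' c - k * al * (al * c + be) ^ n / INR (fact n)) ->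
  k * (al * b + be) ^ (S n) / INR (fact (S n)) - k * (al * a + be) ^ (S n) / INR (fact (S n))
  <= (G b - Q b) - (G a - Q a).
Proof.
  intros HG HQ Ha Hab Hb Hc.
  destruct (mvt_comb G G' (fun y => Q y + k * (al * y + be) ^ (S n) / INR (fact (S n)))
     (fun y => Q' y + k * al * (al * y + be) ^ n / INR (fact n)) a b HG) as [c [Hc1 E]]; auto.
  { intros x. apply (is_derive_plus Q). apply HQ. apply pterm_derive. }
  specialize (Hc c Hc1).
  assert (X : 0 <= (G' c - (Q' c + k * al * (al * c + be) ^ n / INR (fact n))) * (b - a)).
  { apply Rmult_le_pos; lra. }
  lra.
Qed.

Lemma step n G G' Q Q' C :
  (forall x, 0 <= x <= 1 -> deriv01 G x (G' x)) ->
  (forall x, is_derive Q x (Q' x)) ->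
  (forall y, 0 <= y <= 1 -> Rabs (G' y - Q' y) <= C * Rabs (y - /2) ^ n / INR (fact n)) ->
  forall x, 0 <= x <= 1 ->
  Rabs ((G x - Q x) - (G (/2) - Q (/2))) <= C * Rabs (x - /2) ^ (S n) / INR (fact (S n)).
Proof.
  intros HG HQ HB x Hx.
  assert (Z : (0 ^ (S n)) = 0) by (apply pow_i; lia).
  destruct (Rle_or_lt (/2) x) as [Hle|Hlt].
  - rewrite (Rabs_right (x - /2)) by lra.
    assert (U := one_side_le G G' Q Q' C 1 (- /2) n (/2) x HG HQ ltac:(lra) Hle ltac:(lra)).
    assert (L := one_side_ge G G' Q Q' (- C) 1 (- /2) n (/2) x HG HQ ltac:(lra) Hle ltac:(lra)).
    replace (1 * / 2 + - / 2) with 0 in U, L by ring. replace (1 * x + - / 2) with (x - /2) in U, L by ring.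
    rewrite Z in U, L.
    assert (A1 : forall c, / 2 <= c <= x -> Rabs (G' c - Q' c) <= C * (1 * c + - / 2) ^ n / INR (fact n)).
    { intros c Hc. replace (1 * c + - / 2) with (Rabs (c - /2)). apply HB; lra.
      rewrite Rabs_right; lra. }
    apply Rabs_le. split.
    + assert (L' : - C * (x - / 2) ^ S n / INR (fact (S n)) <= G x - Q x - (G (/ 2) - Q (/ 2))).
      { apply Rle_trans with (2 := L ltac:(intros c Hc; specialize (A1 c Hc);
           apply Rabs_le_between in A1; unfold Rdiv in *; lra)).
        unfold Rdiv; lra. }
      unfold Rdiv in *. lra.
    + assert (U' : G x - Q x - (G (/ 2) - Q (/ 2)) <= C * (x - / 2) ^ S n / INR (fact (S n))).
      { apply Rle_trans with (1 := U ltac:(intros c Hc; specialize (A1 c Hc);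
           apply Rabs_le_between in A1; unfold Rdiv in *; lra)).
        unfold Rdiv; lra. }
      exact U'.
  - rewrite (Rabs_left (x - /2)) by lra.
    assert (U := one_side_le G G' Q Q' (- C) (-1) (/2) n x (/2) HG HQ ltac:(lra) ltac:(lra) ltac:(lra)).
    assert (L := one_side_ge G G' Q Q' C (-1) (/2) n x (/2) HG HQ ltac:(lra) ltac:(lra) ltac:(lra)).
    replace (-1 * / 2 + / 2) with 0 in U, L by ring. replace (-1 * x + / 2) with (- (x - /2)) in U, L by ring.
    rewrite Z in U, L.
    assert (A1 : forall c, x <= c <= /2 -> Rabs (G' c - Q' c) <= C * (-1 * c + / 2) ^ n / INR (fact n)).
    { intros c Hc. replace (-1 * c + / 2) with (Rabs (c - /2)). apply HB; lra.
      rewrite Rabs_left1; lra. }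
    apply Rabs_le. split.
    + assert (U' : G (/ 2) - Q (/ 2) - (G x - Q x) <= C * (- (x - / 2)) ^ S n / INR (fact (S n))).
      { apply Rle_trans with (1 := U ltac:(intros c Hc; specialize (A1 c Hc);
           apply Rabs_le_between in A1; unfold Rdiv in *; lra)).
        unfold Rdiv; lra. }
      unfold Rdiv in *. lra.
    + assert (L' : - C * (- (x - / 2)) ^ S n / INR (fact (S n)) <= G (/ 2) - Q (/ 2) - (G x - Q x)).
      { apply Rle_trans with (2 := L ltac:(intros c Hc; specialize (A1 c Hc);
           apply Rabs_le_between in A1; unfold Rdiv in *; lra)).
        unfold Rdiv; lra. }
      unfold Rdiv in *. lra.
Qed.

Fixpoint Tay (fd : nat -> R -> R) (n : nat) (y : R) : R :=
  match n with
  | O => 0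
  | S k => Tay fd k y + fd k (/2) * (y - /2) ^ k / INR (fact k)
  end.

Lemma is_derive_eq (f : R -> R) x l l' : is_derive f x l -> l = l' -> is_derive f x l'.
Proof. intros H <-; exact H. Qed.

Lemma Tay_deriv n : forall fd y, is_derive (Tay fd (S n)) y (Tay (fun k => fd (S k)) n y).
Proof.
  induction n as [|n IH]; intros fd y.
  - apply (is_derive_ext (fun _ => fd 0%nat (/2))).
    { intros t. simpl. field. }
    eapply is_derive_eq. apply is_derive_Reals, derivable_pt_lim_const. simpl; reflexivity.
  - apply (is_derive_ext (fun t => Tay fd (S n) t +
        fd (S n) (/2) * (1 * t + - /2) ^ (S n) / INR (fact (S n)))).
    { intros t. change (Tay fd (S (S n)) t) with
        (Tay fd (S n) t + fd (S n) (/2) * (t - /2) ^ (S n) / INR (fact (S n))).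
      replace (1 * t + - / 2) with (t - /2) by ring; reflexivity. }
    eapply is_derive_eq.
    { apply (is_derive_plus (Tay fd (S n))). apply IH. apply pterm_derive. }
    simpl. change (@plus R_NormedModule) with Rplus. replace (1 * y + - / 2) with (y - /2) by ring. cbv beta. unfold Rdiv; ring.
Qed.

Lemma Tay_half n fd : Tay fd (S n) (/2) = fd 0%nat (/2).
Proof.
  induction n as [|n IH].
  - simpl. field.
  - change (Tay fd (S (S n)) (/2)) with
      (Tay fd (S n) (/2) + fd (S n) (/2) * (/2 - /2) ^ (S n) / INR (fact (S n))).
    rewrite IH. replace (/2 - /2) with 0 by ring. rewrite pow_i by lia.
    unfold Rdiv. ring.
Qed.

Lemma taylor n : forall fd C,
  (forall k, (k < n)%nat -> forall x, 0 <= x <= 1 -> deriv01 (fd k) x (fd (S k) x)) ->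
  (forall x, 0 <= x <= 1 -> Rabs (fd n x) <= C) ->
  forall x, 0 <= x <= 1 -> Rabs (fd 0%nat x - Tay fd n x) <= C * Rabs (x - /2) ^ n / INR (fact n).
Proof.
  induction n as [|n IH]; intros fd C Hd HC x Hx.
  - simpl. replace (fd 0%nat x - 0) with (fd 0%nat x) by ring.
    replace (C * 1 / 1) with C by field. auto.
  - assert (H := step n (fd 0%nat) (fd 1%nat) (Tay fd (S n)) (Tay (fun k => fd (S k)) n) C).
    assert (H' : Rabs (fd 0%nat x - Tay fd (S n) x - (fd 0%nat (/ 2) - Tay fd (S n) (/ 2)))
      <= C * Rabs (x - / 2) ^ S n / INR (fact (S n))).
    { apply H; auto.
      - intros; apply Hd; auto; lia.
      - intros t; apply Tay_deriv.
      - intros y Hy. apply (IH (fun k => fd (S k)) C); auto.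
        intros k Hk; apply Hd; lia. }
    rewrite Tay_half in H'. replace (fd 0%nat (/ 2) - fd 0%nat (/ 2)) with 0 in H' by ring.
    rewrite Rminus_0_r in H'. exact H'.
Qed.


Definition lsum (w : nat -> R) (L : list nat) : R := fold_right Rplus 0 (map w L).

Lemma lsum_plus w1 w2 L : lsum (fun x => w1 x + w2 x) L = lsum w1 L + lsum w2 L.
Proof. induction L; unfold lsum in *; simpl; [ring|rewrite IHL; ring]. Qed.

Lemma lsum_scal c w L : lsum (fun x => c * w x) L = c * lsum w L.
Proof. induction L; unfold lsum in *; simpl; [ring|rewrite IHL; ring]. Qed.

Lemma lsum_ext w1 w2 L : (forall x, In x L -> w1 x = w2 x) -> lsum w1 L = lsum w2 L.
Proof.
  induction L as [|a L IH]; intros H; [reflexivity|].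
  unfold lsum in *; simpl. rewrite H by (left; auto). rewrite IH; auto.
  intros; apply H; right; auto.
Qed.

Lemma lsum_const c L : lsum (fun _ => c) L = c * INR (length L).
Proof.
  induction L as [|a L IH]; [unfold lsum; simpl; ring|].
  unfold lsum in *; simpl length; rewrite S_INR; simpl; rewrite IH; ring.
Qed.

Lemma lsum_abs w L C : (forall x, In x L -> Rabs (w x) <= C) ->
  Rabs (lsum w L) <= C * INR (length L).
Proof.
  induction L as [|a L IH]; intros H.
  - unfold lsum; simpl. rewrite Rabs_R0. lra.
  - unfold lsum in *; simpl length; rewrite S_INR; simpl.
    eapply Rle_trans. apply Rabs_triang.
    assert (H1 := H a (or_introl eq_refl)).
    assert (H2 := IH (fun x Hx => H x (or_intror Hx))). lra.
Qed.

Lemma lsum_delta v c s n :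
  lsum (fun j => if Nat.eqb v j then c else 0) (seq s n) =
  if andb (Nat.leb s v) (Nat.ltb v (s + n)) then c else 0.
Proof.
  revert s; induction n as [|n IH]; intros s.
  - unfold lsum; simpl. replace (s + 0)%nat with s by lia.
    destruct (Nat.leb_spec s v); destruct (Nat.ltb_spec v s); simpl; auto; lia.
  - unfold lsum in *; simpl. rewrite IH.
    destruct (Nat.eqb_spec v s); destruct (Nat.leb_spec (S s) v);
    destruct (Nat.ltb_spec v (S s + n)); destruct (Nat.leb_spec s v);
    destruct (Nat.ltb_spec v (s + S n)); simpl; try ring; lia.
Qed.

Lemma lsum_partition (B : nat -> nat) b w L : (forall x, In x L -> (B x < b)%nat) ->
  lsum (fun j => lsum w (filter (fun x => Nat.eqb (B x) j) L)) (seq 0 b) = lsum w L.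
Proof.
  induction L as [|a L IH]; intros H.
  - rewrite (lsum_const 0). unfold lsum; simpl; ring.
  - transitivity (lsum (fun j => (if Nat.eqb (B a) j then w a else 0) +
        lsum w (filter (fun x => Nat.eqb (B x) j) L)) (seq 0 b)).
    { apply lsum_ext. intros j _. simpl. destruct (Nat.eqb (B a) j); unfold lsum; simpl; ring. }
    rewrite lsum_plus, lsum_delta, IH by (intros; apply H; right; auto).
    assert (Ha := H a (or_introl eq_refl)).
    destruct (Nat.leb_spec 0 (B a)); destruct (Nat.ltb_spec (B a) (0 + b)); try lia.
    simpl. unfold lsum; simpl. ring.
Qed.

Definition Reg (m : nat) (B : nat -> nat) (b : nat) (w : nat -> R) : Prop :=
  forall j1 j2, (j1 < b)%nat -> (j2 < b)%nat -> block_sum m B j1 w = block_sum m B j2 w.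

Lemma block_lsum m B j w : block_sum m B j w = lsum w (filter (fun x => Nat.eqb (B x) j) (seq 1 m)).
Proof. reflexivity. Qed.

Lemma Reg_plus m B b w1 w2 : Reg m B b w1 -> Reg m B b w2 -> Reg m B b (fun x => w1 x + w2 x).
Proof. intros H1 H2 j1 j2 h1 h2. rewrite !block_lsum, !lsum_plus, <- !block_lsum, (H1 j1 j2), (H2 j1 j2); auto. Qed.

Lemma Reg_scal m B b c w : Reg m B b w -> Reg m B b (fun x => c * w x).
Proof. intros H1 j1 j2 h1 h2. rewrite !block_lsum, !lsum_scal, <- !block_lsum, (H1 j1 j2); auto. Qed.

Lemma Reg_ext m B b w1 w2 : Reg m B b w1 -> (forall x, w1 x = w2 x) -> Reg m B b w2.
Proof.
  intros H1 E j1 j2 h1 h2. rewrite !block_lsum.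
  rewrite <- (lsum_ext w1 w2) by auto. rewrite <- (lsum_ext w1 w2) by auto.
  rewrite <- !block_lsum. auto.
Qed.

Definition Good m B b r (d : nat) (w : R -> R) : Prop :=
  forall e, (d + e <= r)%nat -> Reg m B b (fun x => INR x ^ e * w (INR x)).

Section GoodS.
Context (m : nat) (B : nat -> nat) (b r : nat)
  (Hreg : forall k j1 j2 : nat, (k <= r)%nat -> (j1 < b)%nat -> (j2 < b)%nat ->
    block_sum m B j1 (fun x => INR x ^ k) = block_sum m B j2 (fun x => INR x ^ k)).

Lemma Good_const d c : Good m B b r d (fun _ => c).
Proof.
  intros e He. apply (Reg_ext m B b (fun x => c * INR x ^ e)).
  - apply Reg_scal. intros j1 j2 h1 h2. apply Hreg; auto; lia.
  - intros; ring.
Qed.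

Lemma Good_plus d w1 w2 : Good m B b r d w1 -> Good m B b r d w2 -> Good m B b r d (fun y => w1 y + w2 y).
Proof.
  intros H1 H2 e He. specialize (H1 e He). specialize (H2 e He).
  eapply Reg_ext. apply (Reg_plus _ _ _ _ _ H1 H2).
  intros; simpl; ring.
Qed.

Lemma Good_scal d c w : Good m B b r d w -> Good m B b r d (fun y => c * w y).
Proof.
  intros H1 e He. specialize (H1 e He).
  eapply Reg_ext. apply (Reg_scal m B b c _ H1).
  intros; simpl; ring.
Qed.

Lemma Good_ext d w1 w2 : Good m B b r d w1 -> (forall y, w1 y = w2 y) -> Good m B b r d w2.
Proof.
  intros H1 E e He. specialize (H1 e He).
  eapply Reg_ext. apply H1. intros; simpl; rewrite E; ring.
Qed.

Lemma Good_up d d' w : Good m B b r d w -> (d <= d')%nat -> Good m B b r d' w.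
Proof. intros H1 Hd e He. apply H1. lia. Qed.

Lemma Good_aff d w al be : Good m B b r d w -> Good m B b r (S d) (fun y => (al * y + be) * w y).
Proof.
  intros H1 e He.
  apply (Reg_ext m B b (fun x => al * (INR x ^ (S e) * w (INR x)) + be * (INR x ^ e * w (INR x)))).
  - apply Reg_plus; apply Reg_scal; apply H1; lia.
  - intros; simpl; ring.
Qed.

Lemma Good_pow n al be : Good m B b r n (fun y => (al * y + be) ^ n).
Proof.
  induction n as [|n IH].
  - apply (Good_ext 0 (fun _ => 1)). apply Good_const. intros; simpl; ring.
  - apply (Good_ext (S n) (fun y => (al * y + be) * (al * y + be) ^ n)).
    apply Good_aff. apply IH. intros; simpl; ring.
Qed.

Fixpoint Sg (n : nat) (a c : R) : R :=
  match n with O => 1 | S k => a * Sg k a c + c ^ (S k) end.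

Lemma pow_diff n a c : a ^ (S n) - c ^ (S n) = (a - c) * Sg n a c.
Proof.
  induction n as [|n IH].
  - simpl; ring.
  - change (Sg (S n) a c) with (a * Sg n a c + c ^ (S n)).
    replace (a ^ S (S n) - c ^ S (S n)) with (a * (a ^ S n - c ^ S n) + (a - c) * c ^ S n)
      by (simpl; ring).
    rewrite IH. ring.
Qed.

Lemma Good_Sg n al be al' be' : Good m B b r n (fun y => Sg n (al * y + be) (al' * y + be')).
Proof.
  induction n as [|n IH].
  - apply (Good_ext 0 (fun _ => 1)). apply Good_const. intros; reflexivity.
  - apply (Good_ext (S n) (fun y => (al * y + be) * Sg n (al * y + be) (al' * y + be')
        + (al' * y + be') ^ (S n))).
    apply Good_plus. apply Good_aff. apply IH. apply Good_pow.
    intros; simpl; ring.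
Qed.

Lemma Good_Tay g n : Good m B b r (pred (pred n)) (fun y => Tay g n (y / INR m) - Tay g n ((y - 1) / INR m)).
Proof.
  induction n as [|n IH].
  - apply (Good_ext 0 (fun _ => 0)). apply Good_const. intros; simpl; ring.
  - apply (Good_ext (pred n) (fun y => (Tay g n (y / INR m) - Tay g n ((y - 1) / INR m)) +
       g n (/2) / INR (fact n) * ((y / INR m - /2) ^ n - ((y - 1) / INR m - /2) ^ n))).
    2: { intros y; simpl; unfold Rdiv; ring. }
    apply Good_plus. apply (Good_up (pred (pred n))); auto; lia.
    apply Good_scal. destruct n as [|j].
    + apply (Good_ext 0 (fun _ => 0)). apply Good_const. intros; simpl; ring.
    + apply (Good_ext j (fun y => / INR m * Sg j (/ INR m * y + - /2) (/ INR m * y + (- / INR m - /2)))).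
      * apply Good_scal. apply Good_Sg.
      * intros y. rewrite pow_diff. unfold Rdiv. f_equal; [ring|]. f_equal; ring.
Qed.

Lemma Good_Reg d w : Good m B b r d w -> (d <= r)%nat -> Reg m B b (fun x => w (INR x)).
Proof.
  intros H Hd. assert (H0 := H 0%nat ltac:(lia)).
  eapply Reg_ext. apply H0. intros; simpl; ring.
Qed.

End GoodS.


Lemma int_part (f P T : R -> R) (a b K : R) :
  (forall x, 0 <= x <= 1 -> exists l, deriv01 f x l) ->
  (forall y, is_derive T y (P y)) -> (forall y, continuous P y) ->
  0 <= a -> a <= b -> b <= 1 ->
  (forall t, 0 <= t <= 1 -> Rabs (f t - P t) <= K) ->
  Rabs (Rint f a b - (T b - T a)) <= (b - a) * K.
Proof.
  intros Hf HT HP Ha Hab Hb HK.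
  assert (Hex : ex_RInt (fun t => f (clamp t)) a b).
  { apply (@ex_RInt_continuous R_CompleteNormedModule). intros z _. apply continuity_pt_filterlim.
    apply clamp_cont. exact Hf. }
  assert (Hex' : ex_RInt f a b).
  { apply (ex_RInt_ext (fun t => f (clamp t))); auto.
    intros x Hx. rewrite Rmin_left in Hx by lra. rewrite Rmax_right in Hx by lra.
    rewrite clamp_id; auto; lra. }
  assert (E : exists pr : Riemann_integrable f a b, RiemannInt pr = Rint f a b).
  { unfold Rint. apply epsilon_spec.
    exists (RiemannInt (ex_RInt_Reals_0 _ _ _ Hex')). eexists; reflexivity. }
  destruct E as [pr E]. rewrite <- E, <- RInt_Reals.
  assert (I1 : is_RInt P a b (T b - T a)).
  { apply (is_RInt_derive T P). intros; apply HT. intros; apply HP. }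
  assert (I2 : is_RInt (fun y => f y - P y) a b (RInt f a b - (T b - T a))).
  { exact (is_RInt_minus _ _ _ _ _ _ (RInt_correct _ _ _ Hex') I1). }
  rewrite <- (is_RInt_unique _ _ _ _ I2).
  apply abs_RInt_le_const; auto.
  - eexists; exact I2.
  - intros t Ht. apply HK; lra.
Qed.


Theorem mainTheorem15 (m b r : nat) (f : R -> R) (fd : nat -> R -> R) (M : R)
  (B : nat -> nat)
  (hm : (1 <= m)%nat) (hb : (1 <= b)%nat)
  (hf0 : forall x, fd 0%nat x = f x)
  (hder : forall k : nat, (k <= r)%nat ->
     forall x, 0 <= x <= 1 -> deriv01 (fd k) x (fd (S k) x))
  (hM : forall x, 0 <= x <= 1 -> Rabs (fd (S r) x) <= M)
  (hB : PTE m b r B) :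
  let c := fun j : nat =>
    block_sum m B j (fun i => Rint f ((INR i - 1) / INR m) (INR i / INR m)) in
  forall i j : nat, (i < b)%nat -> (j < b)%nat ->
    Rabs (c i - c j) <= M / (2 ^ r * INR b * INR (fact (S r))).
Proof.
  intros c i j Hi Hj. destruct hB as [Hpart Hreg].
  assert (HM0 : 0 <= M).
  { specialize (hM 0 ltac:(lra)). generalize (Rabs_pos (fd (S r) 0)). lra. }
  assert (Hm0 : 0 < INR m) by (apply lt_0_INR; lia).
  assert (Hb0 : 0 < INR b) by (apply lt_0_INR; lia).
  assert (HF : 0 < INR (fact (S r))) by (apply lt_0_INR, lt_O_fact).
  assert (H2r : 0 < 2 ^ r) by (apply pow_lt; lra).
  set (K := M / (2 ^ (S r) * INR (fact (S r)))).
  set (fd' := fun k => match k with 0%nat => fun _ : R => 0 | S k => fd k end).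
  set (T := Tay fd' (S (S r))). set (P := Tay fd (S r)).
  set (w := fun x : nat => T (INR x / INR m) - T ((INR x - 1) / INR m)).
  set (g := fun x : nat => Rint f ((INR x - 1) / INR m) (INR x / INR m)).
  assert (HT : forall y, is_derive T y (P y)).
  { intros y. exact (Tay_deriv (S r) fd' y). }
  assert (HPc : forall y, continuous P y).
  { intros y. apply (@ex_derive_continuous R_AbsRing R_NormedModule). eexists. apply Tay_deriv. }
  assert (Htay : forall t, 0 <= t <= 1 -> Rabs (f t - P t) <= K).
  { intros t Ht.
    assert (H := taylor (S r) fd M ltac:(intros k Hk; apply hder; lia) hM t Ht).
    rewrite hf0 in H. eapply Rle_trans. apply H.
    unfold K. unfold Rdiv. rewrite Rinv_mult.
    rewrite <- Rmult_assoc. apply Rmult_le_compat_r.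
    { left; apply Rinv_0_lt_compat; auto. }
    apply Rmult_le_compat_l; auto. rewrite <- pow_inv. apply pow_incr.
    split. apply Rabs_pos. apply Rabs_le; lra. }
  assert (Hfd : forall x, 0 <= x <= 1 -> exists l, deriv01 f x l).
  { intros x Hx. exists (fd 1%nat x). intros eps He.
    destruct (hder 0%nat ltac:(lia) x Hx eps He) as [d [Hd H]].
    exists d; split; auto. intros h Hh1 Hh2 Hh3. rewrite <- !hf0. apply H; auto. }
  assert (Hu : forall x, (1 <= x <= m)%nat -> Rabs (g x - w x) <= / INR m * K).
  { intros x Hx.
    assert (Hx1 : 1 <= INR x) by (apply (le_INR 1); lia).
    assert (Hx2 : INR x <= INR m) by (apply le_INR; lia).
    replace (/ INR m) with (INR x / INR m - (INR x - 1) / INR m) by (field; lra).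
    unfold g, w. apply int_part with (P := P); auto.
    - unfold Rdiv. apply Rmult_le_pos; [lra|left; apply Rinv_0_lt_compat; lra].
    - unfold Rdiv. apply Rmult_le_compat_r; [left; apply Rinv_0_lt_compat; lra|lra].
    - replace 1 with (INR m / INR m) by (field; lra).
      unfold Rdiv. apply Rmult_le_compat_r; [left; apply Rinv_0_lt_compat; lra|lra]. }
  assert (HW : Reg m B b w).
  { exact (Good_Reg m B b r _ _ (Good_Tay m B b r Hreg fd' (S (S r))) (le_n r)). }
  set (L := fun k => filter (fun x => Nat.eqb (B x) k) (seq 1 m)).
  assert (Hc : forall k, c k = block_sum m B k w + lsum (fun x => g x - w x) (L k)).
  { intros k. unfold c. rewrite !block_lsum. fold (L k). rewrite <- lsum_plus.
    apply lsum_ext. intros; unfold g; ring. }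
  assert (HU : forall k, Rabs (lsum (fun x => g x - w x) (L k)) <= / INR m * K * INR (length (L k))).
  { intros k. apply lsum_abs. intros x Hx. unfold L in Hx. apply filter_In in Hx.
    destruct Hx as [Hx _]. apply in_seq in Hx. apply Hu. lia. }
  assert (Hn : forall k, (k < b)%nat -> INR (length (L k)) = INR (length (L 0%nat))).
  { intros k Hk. assert (H := Hreg 0%nat k 0%nat ltac:(lia) Hk ltac:(lia)).
    rewrite !block_lsum in H. simpl pow in H. rewrite !lsum_const in H. unfold L. lra. }
  assert (Hsum : INR (length (L 0%nat)) * INR b = INR m).
  { assert (H := lsum_partition B b (fun _ => 1) (seq 1 m)
      ltac:(intros x Hx; apply in_seq in Hx; apply Hpart; lia)).
    rewrite lsum_const, length_seq in H.
    rewrite (lsum_ext _ (fun _ => INR (length (L 0%nat)))) in H.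
    - rewrite lsum_const, length_seq in H. lra.
    - intros k Hk. apply in_seq in Hk. rewrite lsum_const. fold (L k). rewrite Hn by lia. ring. }
  rewrite !Hc. rewrite (HW i j Hi Hj).
  assert (Hi' := HU i). assert (Hj' := HU j). rewrite Hn in Hi', Hj' by auto.
  replace (INR (length (L 0%nat))) with (INR m / INR b) in Hi', Hj' by (rewrite <- Hsum; field; lra).
  assert (Eq : 2 * (/ INR m * K * (INR m / INR b)) = M / (2 ^ r * INR b * INR (fact (S r)))).
  { unfold K. simpl pow. field. repeat split; lra. }
  rewrite <- Eq.
  replace (block_sum m B j w + lsum (fun x => g x - w x) (L i) -
     (block_sum m B j w + lsum (fun x => g x - w x) (L j)))
    with (lsum (fun x => g x - w x) (L i) - lsum (fun x => g x - w x) (L j)) by ring.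
  eapply Rle_trans. apply Rabs_triang. rewrite Rabs_Ropp. lra.
Qed.
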